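(* Let $R=K[x_1,\ldots,x_n]$ be a polynomial ring over a field $K$ with its $\mathbb{N}^n$-grading, and let $M$ be a nonzero squarefree $R$-module. If $M_0=0$ (the component of degree $0\in\mathbb{N}^n$), then $\operatorname{depth} M>0$.
   Context: An $\mathbb{N}^n$-graded $R$-module $M$ (with $\deg x_j=e_j$, the $j$-th unit vector) is squarefree if, for all $\alpha=(\alpha_1,\ldots,\alpha_n)\in\mathbb{N}^n$ and all $j$, multiplication by $x_j$ from $M_\alpha$ to $M_{\alpha+e_j}$ is bijective whenever $\alpha_j\neq 0$. Depth is taken with respect to $\mathfrak{m}=(x_1,\ldots,x_n)$. *)

(* Defs.v *)
From HB Require Import structures.
From mathcomp Require Import all_boot all_order all_algebra.
From mathcomp Require Export mpoly.
Set Implicit Arguments. Unset Strict Implicit. Unset Printing Implicit Defensive.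
Import Order.TTheory GRing.Theory.
Local Open Scope ring_scope.

Section Defs.
Variables (K : fieldType) (n : nat) (M : lmodType {mpoly K[n]}).

(* An N^n-grading on the R-module M (R = K[x_1..x_n]), given by the family of
   projections comp a : M -> M onto the homogeneous components M_a, a in N^n. *)
Definition Nn_grading (comp : 'X_{1..n} -> M -> M) : Prop :=
  [/\ (forall a m1 m2, comp a (m1 + m2) = comp a m1 + comp a m2),
      (forall a (c : K) m, comp a (c%:MP *: m) = c%:MP *: comp a m),
      (forall a b m, comp a (comp b m) = if a == b then comp b m else 0),
      (forall m, exists2 s : seq 'X_{1..n}, uniq s & m = \sum_(a <- s) comp a m)
    & (forall (j : 'I_n) a m,
          comp (a + U_(j))%MM ('X_j *: comp a m) = 'X_j *: comp a m)].

Definition fin_gen_mod : Prop :=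
  exists gs : seq M, forall m, exists f : 'I_(size gs) -> {mpoly K[n]},
    m = \sum_(i < size gs) f i *: gs`_i.

Definition squarefree_mod (comp : 'X_{1..n} -> M -> M) : Prop :=
  forall (a : 'X_{1..n}) (j : 'I_n), a j <> 0%N ->
    (forall m, comp a m = m -> 'X_j *: m = 0 -> m = 0) /\
    (forall m', comp (a + U_(j))%MM m' = m' ->
       exists m, comp a m = m /\ 'X_j *: m = m').

Definition M_regular (f : {mpoly K[n]}) : Prop :=
  (forall m : M, f *: m = 0 -> m = 0) /\ (exists m : M, forall m', m <> f *: m').

(* depth M > 0 (depth w.r.t. m = (x_1..x_n), as the supremum of lengths of
   M-regular sequences in m): there is an M-regular element in m. *)
Definition depth_pos : Prop :=
  exists f : {mpoly K[n]}, f@_0%MM = 0 /\ M_regular f.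

End Defs.

(* Main.v *)
Require Import Defs.
From HB Require Import structures.
From mathcomp Require Import all_boot all_order all_algebra.
From mathcomp Require Import mpoly.
From Stdlib Require Import Classical.
Local Open Scope ring_scope.
Import GRing.Theory.

Lemma seq_argmax (T : eqType) (s : seq T) (phi : T -> nat) :
  s != [::] -> exists2 a, a \in s & forall c, c \in s -> (phi c <= phi a)%N.
Proof.
elim: s => [//|x s IH] _.
case: (eqVneq s [::]) => [->|/IH [a ain amax]].
  by exists x; rewrite ?inE // => c; rewrite inE => /eqP ->.
case: (leqP (phi x) (phi a)) => h.
  exists a; first by rewrite inE ain orbT.
  by move=> c; rewrite inE => /orP [/eqP ->|/amax].
exists x; first by rewrite inE eqxx.
move=> c; rewrite inE => /orP [/eqP ->//|/amax h']; exact: leq_trans h' (ltnW h).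
Qed.

Lemma ex_min_prop (P : nat -> Prop) :
  (exists k, P k) -> exists k, P k /\ forall l, (l < k)%N -> ~ P l.
Proof.
move=> [k Pk]; elim/ltn_ind: k Pk => k IH Pk.
case: (classic (exists l, (l < k)%N /\ P l)) => [[l [lk Pl]]|H].
  exact: IH lk Pl.
exists k; split => // l lk Pl; apply: H; by exists l.
Qed.

Definition phiw {n} (x : 'X_{1..n}) : nat := (\sum_(i < n) (n - i) * x i)%N.

Lemma phiwD n (x : 'X_{1..n}) (i : 'I_n) :
  phiw (x + U_(i))%MM = (phiw x + (n - i))%N.
Proof.
rewrite /phiw (eq_bigr (fun l : 'I_n => (n - l) * x l + (n - l) * (i == l))%N);
  last by move=> l _; rewrite mnmDE mnm1E mulnDr.
rewrite big_split /=; congr (_ + _)%N.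
rewrite (bigD1 i) //= eqxx muln1 big1 ?addn0 // => l li.
by rewrite eq_sym (negbTE li) muln0.
Qed.

Theorem lemma3p1 (K : fieldType) (n : nat) (M : lmodType {mpoly K[n]})
    (comp : 'X_{1..n} -> M -> M) :
  Nn_grading comp -> fin_gen_mod M -> squarefree_mod comp ->
  (exists m : M, m <> 0) ->
  (forall m : M, comp 0%MM m = 0) ->
  depth_pos M.
Proof.
move=> [cD cZ cc cdec cX] _ sqf [m0 m0nz] c0.
have comp0 : forall a, comp a 0 = 0.
  move=> a; have h := cD a 0 0; rewrite addr0 in h.
  by apply: (addrI (comp a 0)); rewrite addr0 -h.
have compS : forall a (I : Type) (r : seq I) (F : I -> M),
    comp a (\sum_(i <- r) F i) = \sum_(i <- r) comp a (F i).
  by move=> a I r F; apply: (big_morph _ (cD a) (comp0 a)).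
have hom : forall a m, comp a (comp a m) = comp a m by move=> a m; rewrite cc eqxx.
have cXe : forall (j : 'I_n) a b m, comp b ('X_j *: comp a m) =
    if b == (a + U_(j))%MM then 'X_j *: comp a m else 0.
  move=> j a b m; rewrite -{1}cX cc; case: eqP => // _; by rewrite cX.
set f : {mpoly K[n]} := \sum_(j < n) 'X_j.
have expand : forall m s, m = \sum_(c <- s) comp c m -> forall b,
    comp b (f *: m) = \sum_(k < n) \sum_(c <- s)
      (if b == (c + U_(k))%MM then 'X_k *: comp c m else 0).
  move=> m s Hm b.
  have -> : f *: m = \sum_(k < n) \sum_(c <- s) 'X_k *: comp c m.
    rewrite scaler_suml; apply: eq_bigr => k _.
    by rewrite {1}Hm scaler_sumr.
  rewrite compS; apply: eq_bigr => k _; rewrite compS.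
  by apply: eq_bigr => c _; rewrite cXe.
have exP : exists d, exists a m, [/\ mdeg a = d, comp a m = m & m != 0].
  have [s _ Hs] := cdec m0.
  case: (boolP (has (fun a => comp a m0 != 0) s)) => [/hasP [a _ nz]|].
    by exists (mdeg a), a, (comp a m0); split.
  move/hasPn => H; exfalso; apply: m0nz; rewrite Hs big_seq big1 // => a ain.
  by have := H a ain; rewrite negbK => /eqP.
have [d [[a1 [m1 [da1 hm1 m1nz]]] dmin]] :=
  @ex_min_prop (fun d => exists a m, [/\ mdeg a = d, comp a m = m & m != 0]) exP.
have lowdeg : forall c m, (mdeg c < d)%N -> comp c m = 0.
  move=> c m cd; case: (eqVneq (comp c m) 0) => // nz; exfalso.
  by apply: (dmin _ cd); exists c, (comp c m); split.
exists f; split.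
  rewrite /f raddf_sum big1 // => j _; change ((('X_j : {mpoly K[n]})@_0%MM) = 0).
  by rewrite mcoeffX mnm1_eq0.
split.
  move=> m fm0; case: (eqVneq m 0) => // mnz; exfalso.
  have [s us Hm] := cdec m.
  set s' := [seq a <- s | comp a m != 0].
  have s'nz : s' != [::].
    apply/eqP => H; move/eqP: mnz; apply; apply/eqP.
    rewrite Hm big_seq big1 // => a ain.
    case: (eqVneq (comp a m) 0) => // nz.
    have : a \in s' by rewrite mem_filter nz ain.
    by rewrite H.
  have [a ain amax] := @seq_argmax _ s' (@phiw n) s'nz.
  move: ain; rewrite mem_filter => /andP [anz ains].
  have [i0 ai0] : exists i0 : 'I_n, a i0 != 0%N.
    case: (boolP [exists i, a i != 0%N]) => [/existsP [i hi]|/existsPn H].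
      by exists i.
    exfalso; move: anz; have -> : a = 0%MM.
      by apply/mnmP => i; have := H i; rewrite negbK mnm0E => /eqP.
    by rewrite c0 eqxx.
  case: (@arg_minnP _ i0 (fun i : 'I_n => a i != 0%N) (fun i : 'I_n => nat_of_ord i) ai0) => j ajnz jmin.
  have e := expand m s Hm (a + U_(j))%MM.
  rewrite fm0 comp0 (bigD1 j) //= (bigD1_seq a) //= eqxx in e.
  rewrite big1_seq ?addr0 in e; last first.
    move=> c /andP [ca _]; case: eqP => // /addIm ac.
    by rewrite ac eqxx in ca.
  rewrite big1 ?addr0 in e; last first.
    move=> k kj; rewrite big1_seq // => c /andP [_ cs].
    case: eqP => // e2.
    case: (eqVneq (comp c m) 0) => [->|cnz]; first by rewrite scaler0.
    exfalso.
    have cin : c \in s' by rewrite mem_filter cnz cs.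
    have := amax c cin.
    have ek := congr1 (fun x : 'X_{1..n} => x k) e2.
    rewrite /= !mnmDE !mnm1E eqxx eq_sym (negbTE kj) addn0 in ek.
    have akn : a k != 0%N by rewrite ek addn1.
    have jk : (j < k)%N.
      rewrite ltn_neqAle jmin // andbT.
      by apply/negP => /eqP /val_inj E; move: kj; rewrite E eqxx.
    have := congr1 (@phiw n) e2; rewrite !phiwD => ph.
    rewrite leqNgt; apply/negP/negPn.
    have kn : (k < n)%N := ltn_ord k.
    have : (n - k < n - j)%N by apply: ltn_sub2l => //; exact: leq_trans jk kn.
    move=> h; rewrite -(ltn_add2r (n - k)) -ph. by rewrite ltn_add2l.
  have [H1 _] := sqf a j (fun E => negP ajnz (introT eqP E)).
  by move: anz; rewrite (H1 _ (hom a m) (esym e)) eqxx.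
exists m1 => m' E.
have [s _ Hs] := cdec m'.
move/eqP: m1nz; apply; apply/eqP.
rewrite -hm1 E (expand m' s Hs a1) big1 // => k _.
rewrite big1 // => c _; case: eqP => // ac.
rewrite lowdeg ?scaler0 // -da1 ac mdegD mdeg1 addn1 //.
Qed.
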